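(* Let $\varphi=(1+\sqrt5)/2$ and let $s_Z$ be the Zeckendorf sum of digits function. Let $I_Z=(I_Z(n))_{n\ge1}$ be the increasing enumeration of the points of increase of $s_Z$, let $C_Z=(C_Z(n))_{n\ge1}$ be the increasing enumeration of the points of constancy of $s_Z$, and let $D_Z=(D_Z(n))_{n\ge1}$ be defined by $D_Z(1)=-1$ and, for $n\ge1$, $D_Z(n+1)$ is the $n$-th smallest point of decrease of $s_Z$. Then: (i) $I_Z(n)=\lfloor n\varphi\rfloor+n-2$ for all $n\ge1$; (ii) the set of points of constancy of $s_Z$ equals $\{2\lfloor n\varphi\rfloor+n-2:\ n\ge1\}\cup\{3\lfloor n\varphi\rfloor+2n-3:\ n\ge1\}$, i.e. $C_Z$ is the increasing enumeration of this union; (iii) $D_Z(n)=2\lfloor n\varphi\rfloor+n-4$ for all $n\ge1$.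
   Context: Fibonacci numbers: $F_0=0$, $F_1=1$, $F_n=F_{n-1}+F_{n-2}$ for $n\ge2$. Every integer $N\ge0$ can be written uniquely (ignoring leading zeros) as $N=\sum_{i\ge0}d_i(N)F_{i+2}$ with digits $d_i(N)\in\{0,1\}$ such that no two consecutive digits $d_i,d_{i+1}$ are both $1$ (Zeckendorf expansion). The Zeckendorf sum of digits function is $s_Z(N)=\sum_{i\ge0}d_i(N)$ for $N\ge0$. With $\Delta s_Z(N)=s_Z(N+1)-s_Z(N)$, an integer $N\ge0$ is a point of increase, of constancy, or of decrease of $s_Z$ according as $\Delta s_Z(N)>0$, $=0$, or $<0$. *)

(* Defs.v *)
From Stdlib Require Import Reals Arith ZArith List.
Import ListNotations.

Fixpoint fib (n : nat) : nat :=
  match n with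
  | 0 => 0
  | S m => match m with
           | 0 => 1
           | S k => fib m + fib k
           end
  end.

Fixpoint topk (k N : nat) : nat :=
  match k with
  | 0 => 0
  | S k' => if fib k <=? N then k else topk k' N
  end.

(* index of the largest Fibonacci number F_k (k >= 2) not exceeding N >= 1;
   since F_(N+2) > N, searching from N+2 downward suffices. *)
Definition ztop (N : nat) : nat := topk (S (S N)) N.

(* Number of nonzero digits of the Zeckendorf expansion, computed by the
   greedy algorithm (which produces exactly the Zeckendorf expansion):
   repeatedly subtract the largest Fibonacci number F_k <= N.
   Each step decreases N by at least 1, so fuel N suffices. *)
Fixpoint sZ_aux (fuel N : nat) : nat :=
  match fuel with
  | 0 => 0
  | S f => match N with
           | 0 => 0
           | S _ => S (sZ_aux f (N - fib (ztop N)))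
           end
  end.

Definition sZ (N : nat) : nat := sZ_aux N N.

Definition incr_pt (N : nat) : bool := sZ N <? sZ (S N).
Definition const_pt (N : nat) : bool := sZ (S N) =? sZ N.
Definition decr_pt (N : nat) : bool := sZ (S N) <? sZ N.

Definition is_nth_smallest (P : nat -> bool) (n x : nat) : Prop :=
  P x = true /\ length (filter P (seq 0 x)) = (n - 1)%nat.

Open Scope R_scope.

Definition phi : R := (1 + sqrt 5) / 2.

(* floor of a real number (Stdlib's Int_part r = up r - 1 = floor r) *)
Definition floorR (x : R) : Z := Int_part x.

Close Scope R_scope.

(* Main.v *)
Require Import Defs.
From Stdlib Require Import Reals Arith ZArith List Lra Lia.
Import ListNotations.

Fixpoint fsum (l : list nat) : nat := match l with [] => 0 | a :: r => fib a + fsum r end.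

Inductive zv : list nat -> Prop :=
| zv_nil : zv []
| zv_cons a l : 2 <= a -> (forall y, In y l -> y + 2 <= a) -> zv l -> zv (a :: l).

Lemma fib_SS n : fib (S (S n)) = fib (S n) + fib n.
Proof. reflexivity. Qed.

Lemma fib_pos_aux n : 1 <= fib (S n) /\ 1 <= fib (S (S n)).
Proof.
  induction n as [|n [H1 H2]]; [simpl; lia|]. split; [exact H2|].
  rewrite fib_SS. lia.
Qed.

Lemma fib_pos n : 1 <= n -> 1 <= fib n.
Proof. destruct n; [lia|]. intros _. apply fib_pos_aux. Qed.

Lemma fib_step n : fib n <= fib (S n).
Proof. destruct n; [simpl; lia|]. rewrite fib_SS. lia. Qed.

Lemma fib_mono m n : m <= n -> fib m <= fib n.
Proof.
  induction 1; [lia|]. pose proof (fib_step m0). lia.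
Qed.

Lemma fib_lt_inv m n : fib m < fib n -> m < n.
Proof.
  intros H. destruct (Nat.lt_ge_cases m n) as [|Hle]; [auto|].
  apply fib_mono in Hle. lia.
Qed.

Lemma fib_ge n : n + 1 <= fib (S (S n)).
Proof.
  induction n; [simpl; lia|]. rewrite fib_SS. pose proof (fib_pos_aux n). lia.
Qed.

Lemma zv_ge2 l : zv l -> forall y, In y l -> 2 <= y.
Proof.
  induction 1; simpl; intros y Hy; [contradiction|].
  destruct Hy; subst; auto.
Qed.

Lemma in_fsum l y : In y l -> fib y <= fsum l.
Proof.
  induction l; simpl; [contradiction|]. intros [->|H]; [lia|]. specialize (IHl H). lia.
Qed.

Lemma fsum_app h t : fsum (h ++ t) = fsum h + fsum t.
Proof. induction h; simpl; lia. Qed.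

Lemma fsum_bound l : zv l -> forall K, 1 <= K -> (forall y, In y l -> y < K) -> fsum l < fib K.
Proof.
  induction 1 as [|a l Ha Hg Hz IH]; intros K HK Hy; simpl.
  - apply fib_pos in HK. lia.
  - assert (HaK : a < K) by (apply Hy; simpl; auto).
    assert (H1 : fsum l < fib (a - 1)).
    { apply IH; [lia|]. intros y Hy'. specialize (Hg y Hy'). lia. }
    destruct a as [|[|b]]; [lia|lia|].
    replace (S (S b) - 1) with (S b) in H1 by lia.
    assert (fib (S (S (S b))) <= fib K) by (apply fib_mono; lia).
    rewrite (fib_SS (S b)) in H. lia.
Qed.

Lemma zv_head a l : zv (a :: l) -> fib a <= fsum (a :: l) < fib (S a).
Proof.
  intros H. split; [simpl; lia|]. apply (fsum_bound _ H); [lia|].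
  intros y [->|Hy]; [lia|]. inversion H; subst. specialize (H3 y Hy). lia.
Qed.

Lemma zv_uniq l1 : zv l1 -> forall l2, zv l2 -> fsum l1 = fsum l2 -> l1 = l2.
Proof.
  induction 1 as [|a l Ha Hg Hz IH]; intros l2 H2 Heq.
  - destruct l2 as [|b l2]; auto. inversion H2; subst.
    pose proof (fib_pos b ltac:(lia)). simpl in Heq. lia.
  - destruct l2 as [|b l2].
    + pose proof (fib_pos a ltac:(lia)). simpl in Heq. lia.
    + assert (Hz1 : zv (a :: l)) by (constructor; auto).
      pose proof (zv_head _ _ Hz1) as [A1 A2]. pose proof (zv_head _ _ H2) as [B1 B2].
      assert (a = b).
      { assert (a < S b) by (apply fib_lt_inv; lia).
        assert (b < S a) by (apply fib_lt_inv; lia). lia. }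
      subst b. f_equal. inversion H2; subst. apply IH; auto. simpl in Heq. lia.
Qed.

Lemma topk_spec k N :
  (forall j, topk k N < j <= k -> N < fib j) /\ topk k N <= k /\
  (topk k N = 0 \/ fib (topk k N) <= N).
Proof.
  induction k as [|k IH]; cbn [topk].
  - split; [intros; lia|]. auto.
  - destruct (fib (S k) <=? N) eqn:E.
    + apply Nat.leb_le in E. split; [intros; lia|]. auto.
    + apply Nat.leb_gt in E. destruct IH as [I1 [I2 I3]].
      split; [|split; [lia|auto]].
      intros j Hj. destruct (Nat.eq_dec j (S k)); [subst; auto|]. apply I1. lia.
Qed.

Lemma ztop_spec N : 1 <= N -> 2 <= ztop N /\ fib (ztop N) <= N /\ N < fib (S (ztop N)).
Proof.
  intros HN. unfold ztop. destruct (topk_spec (S (S N)) N) as [I1 [I2 I3]].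
  set (r := topk (S (S N)) N) in *.
  assert (r <> 0). { intro H0. assert (N < fib 1) by (apply I1; lia). simpl in H. lia. }
  destruct I3 as [|I3]; [contradiction|].
  assert (r <> 1). { intro H1. assert (N < fib 2) by (apply I1; lia). simpl in H0. lia. }
  assert (r <> S (S N)). { intro H2. rewrite H2 in I3. pose proof (fib_ge N). lia. }
  split; [lia|]. split; [auto|]. apply I1. lia.
Qed.

Fixpoint zeck_aux (fuel N : nat) : list nat :=
  match fuel with
  | 0 => []
  | S f => match N with
           | 0 => []
           | S _ => ztop N :: zeck_aux f (N - fib (ztop N))
           end
  end.

Definition zeck N := zeck_aux N N.

Lemma sZ_aux_len f N : sZ_aux f N = length (zeck_aux f N).
Proof.
  revert N; induction f; intros N; simpl; auto. destruct N; simpl; auto.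
Qed.

Lemma zeck_aux_ok f N : N <= f -> zv (zeck_aux f N) /\ fsum (zeck_aux f N) = N.
Proof.
  revert N; induction f; intros N HN; simpl.
  - assert (N = 0) by lia. subst. split; [constructor|auto].
  - destruct N as [|n]; [split; [constructor|auto]|].
    destruct (ztop_spec (S n)) as [Z1 [Z2 Z3]]; [lia|].
    set (k := ztop (S n)) in *.
    pose proof (fib_pos k ltac:(lia)).
    destruct (IHf (S n - fib k)) as [IH1 IH2]; [lia|].
    destruct k as [|[|b]]; [lia|lia|].
    rewrite fib_SS in Z3.
    split.
    + constructor; auto. intros y Hy. pose proof (in_fsum _ _ Hy). rewrite IH2 in H0.
      assert (y < S b) by (apply fib_lt_inv; lia). lia.
    + cbn [fsum]. lia.
Qed.

Lemma zeck_ok N : zv (zeck N) /\ fsum (zeck N) = N.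
Proof. apply zeck_aux_ok. lia. Qed.

Lemma zeck_fsum l : zv l -> zeck (fsum l) = l.
Proof.
  intros H. destruct (zeck_ok (fsum l)). apply zv_uniq; auto.
Qed.

Lemma sZ_fsum l : zv l -> sZ (fsum l) = length l.
Proof.
  intros H. unfold sZ. rewrite sZ_aux_len. fold (zeck (fsum l)). rewrite zeck_fsum; auto.
Qed.

Definition Sh n := fsum (map S (zeck n)).

Lemma zv_mapS l : zv l -> zv (map S l).
Proof.
  induction 1; simpl; constructor; auto; try lia.
  intros y Hy. apply in_map_iff in Hy as [y' [<- Hy']]. specialize (H0 y' Hy'). lia.
Qed.

Lemma Sh_fsum l : zv l -> Sh (fsum l) = fsum (map S l).
Proof. intros H. unfold Sh. rewrite zeck_fsum; auto. Qed.

Lemma fsum_SS l : fsum (map S (map S l)) = fsum (map S l) + fsum l.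
Proof. induction l; cbn [map fsum]; [auto|]. rewrite fib_SS. lia. Qed.

Lemma Sh2 x : Sh (Sh x) = Sh x + x.
Proof.
  destruct (zeck_ok x) as [H1 H2]. unfold Sh at 2. rewrite Sh_fsum by (apply zv_mapS; auto).
  rewrite fsum_SS. unfold Sh. rewrite H2. auto.
Qed.

Lemma zv_app h t : zv h -> zv t -> (forall x y, In x h -> In y t -> y + 2 <= x) -> zv (h ++ t).
Proof.
  induction 1 as [|a l Ha Hg Hz IH]; intros Ht Hxy; simpl; auto.
  constructor; auto.
  - intros y Hy. apply in_app_or in Hy as [Hy|Hy]; auto. apply Hxy; simpl; auto.
  - apply IH; auto. intros x y Hx Hy. apply Hxy; simpl; auto.
Qed.

Lemma zv_app_inv h t : zv (h ++ t) -> zv h /\ zv t /\ (forall x y, In x h -> In y t -> y + 2 <= x).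
Proof.
  induction h as [|a h IH]; simpl; intros H.
  - split; [constructor|]. split; auto. intros; contradiction.
  - inversion H; subst. destruct (IH H4) as [A [B C]].
    split; [|split; auto].
    + constructor; auto. intros y Hy. apply H3. apply in_or_app; auto.
    + intros x y [->|Hx] Hy; auto. apply H3. apply in_or_app; auto.
Qed.

Lemma iter_list k m : exists L, zv L /\ fsum L = Nat.iter k Sh m /\
  (forall x, In x L -> k + 2 <= x) /\ (1 <= m -> L <> []).
Proof.
  induction k as [|k [L [H1 [H2 [H3 H4]]]]].
  - destruct (zeck_ok m) as [A B]. exists (zeck m). split; auto. split; auto.
    split; [apply zv_ge2; auto|]. intros Hm E. rewrite E in B. simpl in B. lia.
  - exists (map S L). split; [apply zv_mapS; auto|]. split.
    + simpl. rewrite <- H2. rewrite Sh_fsum; auto.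
    + split.
      * intros x Hx. apply in_map_iff in Hx as [y [<- Hy]]. specialize (H3 y Hy). lia.
      * intros Hm E. apply H4; auto. destruct L; simpl in E; congruence.
Qed.

Lemma img k : forall l, zv l -> (forall x, In x l -> k + 2 <= x) ->
  exists m, fsum l = Nat.iter k Sh m /\ (l <> [] -> 1 <= m).
Proof.
  induction k as [|k IH]; intros l Hz Hx.
  - exists (fsum l). split; auto. intros Hne. destruct l as [|a l]; [congruence|].
    simpl. pose proof (fib_pos a). specialize (Hx a (or_introl eq_refl)). specialize (H ltac:(lia)). lia.
  - assert (Hl : map S (map pred l) = l).
    { rewrite map_map. clear IH Hz. induction l; simpl; auto. f_equal.
      - specialize (Hx a (or_introl eq_refl)). lia.
      - apply IHl. intros; apply Hx; simpl; auto. }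
    assert (Hz' : zv (map pred l)).
    { clear IH Hl. induction Hz; simpl; constructor; auto.
      - specialize (Hx a (or_introl eq_refl)). lia.
      - intros y Hy. apply in_map_iff in Hy as [y' [<- Hy']]. specialize (H0 y' Hy'). specialize (Hx a (or_introl eq_refl)). lia.
      - apply IHHz. intros; apply Hx; simpl; auto. }
    destruct (IH (map pred l) Hz') as [m [E1 E2]].
    { intros x Hx'. apply in_map_iff in Hx' as [y [<- Hy]]. specialize (Hx y Hy). lia. }
    exists m. split.
    + rewrite <- Hl. rewrite <- Sh_fsum by auto. rewrite E1. reflexivity.
    + intros Hne. apply E2. destruct l; simpl; congruence.
Qed.

Fixpoint blk (i : nat) : list nat :=
  match i with
  | 0 => []
  | S k => match k with
           | 0 => []
           | S j => match j with 0 => [] | S _ => k :: blk j end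
           end
  end.

Lemma blk_ok_aux i : (forall y, In y (blk i) -> 2 <= y < i) /\ zv (blk i) /\ fsum (blk i) = fib i - 1
  /\ (forall y, In y (blk (S i)) -> 2 <= y < S i) /\ zv (blk (S i)) /\ fsum (blk (S i)) = fib (S i) - 1.
Proof.
  induction i as [|i [A1 [A2 [A3 [B1 [B2 B3]]]]]].
  - simpl. repeat split; try (intros; contradiction); constructor.
  - split; [exact B1|]. split; [exact B2|]. split; [exact B3|].
    destruct i as [|j].
    + simpl. repeat split; try (intros; contradiction); try constructor.
    + change (blk (S (S (S j)))) with (S (S j) :: blk (S j)).
      split; [|split].
      * intros y [<-|Hy]; [lia|]. specialize (A1 y Hy). lia.
      * constructor; auto; [lia|]. intros y Hy. specialize (A1 y Hy). lia.
      * cbn [fsum]. rewrite A3. rewrite (fib_SS (S j)). pose proof (fib_pos (S j) ltac:(lia)). lia.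
Qed.

Lemma blk_ok i : (forall y, In y (blk i) -> 2 <= y < i) /\ zv (blk i) /\ fsum (blk i) = fib i - 1.
Proof. destruct (blk_ok_aux i) as [A [B [C _]]]. auto. Qed.

Lemma blk_len j : 2 <= length (blk (S (S (S (S (S j)))))).
Proof. simpl. destruct j; simpl; lia. Qed.

Lemma DA m : sZ (S (Nat.iter 2 Sh m)) = S (sZ (Nat.iter 2 Sh m)).
Proof.
  destruct (iter_list 2 m) as [L [H1 [H2 [H3 _]]]].
  assert (Z : zv (L ++ [2])).
  { apply zv_app; auto. constructor; [lia| intros; contradiction | constructor].
    intros x y Hx [<-|[]]. specialize (H3 x Hx). lia. }
  rewrite <- H2. replace (S (fsum L)) with (fsum (L ++ [2])) by (rewrite fsum_app; simpl; lia).
  rewrite !sZ_fsum; auto. rewrite length_app. simpl. lia.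
Qed.

Lemma single_zv i : 2 <= i -> zv [i].
Proof. intros; constructor; auto; [intros; contradiction|constructor]. Qed.

Lemma DB1 m : sZ (S (S (Nat.iter 3 Sh m))) = sZ (S (Nat.iter 3 Sh m)).
Proof.
  destruct (iter_list 3 m) as [L [H1 [H2 [H3 _]]]].
  assert (Z2 : zv (L ++ [2])).
  { apply zv_app; auto. apply single_zv; lia. intros x y Hx [<-|[]]. specialize (H3 x Hx). lia. }
  assert (Z3 : zv (L ++ [3])).
  { apply zv_app; auto. apply single_zv; lia. intros x y Hx [<-|[]]. specialize (H3 x Hx). lia. }
  rewrite <- H2. replace (S (fsum L)) with (fsum (L ++ [2])) by (rewrite fsum_app; simpl; lia).
  replace (S (fsum (L ++ [2]))) with (fsum (L ++ [3])) by (rewrite !fsum_app; simpl; lia).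
  rewrite !sZ_fsum; auto. rewrite !length_app. simpl. lia.
Qed.

Lemma DB2 m : sZ (S (S (S (Nat.iter 4 Sh m)))) = sZ (S (S (Nat.iter 4 Sh m))).
Proof.
  destruct (iter_list 4 m) as [L [H1 [H2 [H3 _]]]].
  assert (Z2 : zv (L ++ [3])).
  { apply zv_app; auto. apply single_zv; lia. intros x y Hx [<-|[]]. specialize (H3 x Hx). lia. }
  assert (Z3 : zv (L ++ [4])).
  { apply zv_app; auto. apply single_zv; lia. intros x y Hx [<-|[]]. specialize (H3 x Hx). lia. }
  rewrite <- H2. replace (S (S (fsum L))) with (fsum (L ++ [3])) by (rewrite fsum_app; simpl; lia).
  replace (S (fsum (L ++ [3]))) with (fsum (L ++ [4])) by (rewrite !fsum_app; simpl; lia).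
  rewrite !sZ_fsum; auto. rewrite !length_app. simpl. lia.
Qed.

Lemma DC m N : 1 <= m -> S N = Nat.iter 3 Sh m -> sZ (S N) < sZ N.
Proof.
  intros Hm HN.
  destruct (iter_list 3 m) as [L [H1 [H2 [H3 H4]]]]. specialize (H4 Hm).
  destruct (exists_last H4) as [h [i E]]. subst L.
  destruct (zv_app_inv _ _ H1) as [Zh [Zi G]].
  assert (Hi : 5 <= i) by (apply H3; apply in_or_app; simpl; auto).
  destruct (blk_ok i) as [B1 [B2 B3]].
  assert (Z : zv (h ++ blk i)).
  { apply zv_app; auto. intros x y Hx Hy. specialize (G x i Hx (or_introl eq_refl)). specialize (B1 y Hy). lia. }
  assert (EN : N = fsum (h ++ blk i)).
  { rewrite fsum_app, B3. rewrite fsum_app in H2. cbn [fsum] in H2. pose proof (fib_pos i ltac:(lia)). lia. }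
  rewrite HN, <- H2, EN. rewrite !sZ_fsum; auto. rewrite !length_app. simpl.
  destruct i as [|[|[|[|[|j]]]]]; try lia. pose proof (blk_len j). lia.
Qed.

Lemma cover N : (exists m, N = Nat.iter 2 Sh m) \/ (exists m, N = S (Nat.iter 3 Sh m)) \/
  (exists m, N = S (S (Nat.iter 4 Sh m))) \/ (exists m, 1 <= m /\ S N = Nat.iter 3 Sh m).
Proof.
  destruct (zeck_ok (S N)) as [Z E].
  assert (Hne : zeck (S N) <> []) by (intro H; rewrite H in E; simpl in E; lia).
  destruct (exists_last Hne) as [h [i Ei]]. rewrite Ei in Z, E.
  destruct (zv_app_inv _ _ Z) as [Zh [Zi G]].
  assert (Hi2 : 2 <= i) by (apply (zv_ge2 _ Zi); simpl; auto).
  assert (Gh : forall x, In x h -> i + 2 <= x) by (intros x Hx; apply (G x i Hx); simpl; auto).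
  rewrite fsum_app in E. simpl in E.
  destruct (Nat.le_gt_cases 5 i) as [H5|H5].
  - right; right; right. destruct (img 3 (h ++ [i]) Z) as [m [E1 E2]].
    { intros x Hx. apply in_app_or in Hx as [Hx|[<-|[]]]; [specialize (Gh x Hx)|]; lia. }
    exists m. split. apply E2. destruct h; simpl; congruence.
    rewrite <- E1, fsum_app. simpl. lia.
  - destruct i as [|[|[|[|[|]]]]]; try lia.
    + left. destruct (img 2 h Zh) as [m [E1 _]]. { intros x Hx. specialize (Gh x Hx). lia. }
      exists m. rewrite <- E1. simpl in E. lia.
    + right; left. destruct (img 3 h Zh) as [m [E1 _]]. { intros x Hx. specialize (Gh x Hx). lia. }
      exists m. rewrite <- E1. simpl in E. lia.
    + right; right; left. destruct (img 4 h Zh) as [m [E1 _]]. { intros x Hx. specialize (Gh x Hx). lia. }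
      exists m. rewrite <- E1. simpl in E. lia.
Qed.

Open Scope R_scope.
Definition tt : R := phi - 1.

Lemma s5 : sqrt 5 * sqrt 5 = 5.
Proof. apply sqrt_sqrt. lra. Qed.

Lemma s5b : 2 < sqrt 5 < 3.
Proof. pose proof s5. pose proof (sqrt_pos 5). split; nra. Qed.

Lemma tt_eq : tt * tt = 1 - tt.
Proof. unfold tt, phi. pose proof s5. nra. Qed.

Lemma tt_b : 0 < tt < 1.
Proof. unfold tt, phi. pose proof s5b. lra. Qed.

Fixpoint Ep (l : list nat) : R := match l with [] => 0 | a :: r => (- tt) ^ a + Ep r end.

Lemma fib_psi i : INR (fib (S i)) - phi * INR (fib i) = (- tt) ^ i
  /\ INR (fib (S (S i))) - phi * INR (fib (S i)) = (- tt) ^ (S i).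
Proof.
  induction i as [|i [H1 H2]].
  - simpl. unfold tt. split; lra.
  - split; [exact H2|]. rewrite (fib_SS (S i)), (fib_SS i), !plus_INR. rewrite (fib_SS i), plus_INR in H2.
    replace ((- tt) ^ S (S i)) with ((- tt) ^ i * (tt * tt)) by (simpl; ring).
    rewrite tt_eq. replace ((- tt) ^ S i) with ((- tt) ^ i * (- tt)) in H2 by (simpl; ring).
    nra.
Qed.

Lemma Ep_link l : INR (fsum (map S l)) - phi * INR (fsum l) = Ep l.
Proof.
  induction l as [|a l IH]; cbn [fsum map Ep]. simpl; lra.
  rewrite !plus_INR. destruct (fib_psi a) as [H _]. lra.
Qed.

Lemma pow_neg_t a : (- tt) ^ a = tt ^ a \/ (- tt) ^ a = - tt ^ a.
Proof.
  induction a as [|a [H|H]]; simpl; [left; auto| right | left]; rewrite H; ring.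
Qed.

Lemma pow_t_anti m n : (m <= n)%nat -> tt ^ n <= tt ^ m.
Proof.
  pose proof tt_b. induction 1; [lra|]. simpl. pose proof (pow_lt tt m0 ltac:(lra)). nra.
Qed.

Lemma Ep_bound l : zv l -> forall K, (2 <= K)%nat -> (forall y, In y l -> (y < K)%nat) ->
  - (tt * tt) + tt ^ K <= Ep l <= tt - tt ^ K.
Proof.
  pose proof tt_b as Tb. pose proof tt_eq as Te.
  induction 1 as [|a l Ha Hg Hz IH]; intros K HK Hy; cbn [Ep].
  - pose proof (pow_t_anti 2 K HK). pose proof (pow_t_anti 1 K ltac:(lia)).
    simpl in H, H0. nra.
  - assert (HaK : (a < K)%nat) by (apply Hy; simpl; auto).
    destruct (Nat.eq_dec a 2) as [->|Ha2].
    + destruct l as [|y l]. 2:{ pose proof (zv_ge2 _ Hz y (or_introl eq_refl)). specialize (Hg y (or_introl eq_refl)). lia. }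
      cbn [Ep]. pose proof (pow_t_anti 3 K ltac:(lia)). simpl in H |- *.
      assert (tt * (tt * (tt * 1)) = tt - tt * tt) by nra. nra.
    + destruct a as [|b]; [lia|].
      destruct (IH b ltac:(lia)) as [L U]. { intros y Hy'. specialize (Hg y Hy'). lia. }
      pose proof (pow_t_anti (S (S b)) K ltac:(lia)) as P1.
      pose proof (pow_t_anti b K ltac:(lia)) as P2.
      pose proof (pow_lt tt b ltac:(lra)) as P3.
      replace (tt ^ S (S b)) with (tt * tt * tt ^ b) in P1 by (simpl; ring).
      rewrite Te in P1.
      assert (0 <= tt * tt ^ b) by nra.
      destruct (pow_neg_t (S b)) as [E|E]; rewrite E; simpl; lra.
Qed.

Fixpoint lsum (l : list nat) : nat := match l with [] => 0%nat | a :: r => (a + lsum r)%nat end.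

Lemma lsum_in l y : In y l -> (y <= lsum l)%nat.
Proof. induction l; simpl; [contradiction|]. intros [->|H]; [lia|]. specialize (IHl H). lia. Qed.

Lemma Ep_strict l : zv l -> - (tt * tt) < Ep l < tt.
Proof.
  intros H. destruct (Ep_bound l H (3 + lsum l)) as [A B]; [lia| |].
  - intros y Hy. pose proof (lsum_in _ _ Hy). lia.
  - pose proof (pow_lt tt (3 + lsum l) ltac:(pose proof tt_b; lra)). lra.
Qed.

Lemma Sh_bounds n : INR (Sh n) + 1 < INR (S n) * phi < INR (Sh n) + 2.
Proof.
  destruct (zeck_ok n) as [Z E]. pose proof (Ep_link (zeck n)) as L.
  fold (Sh n) in L. rewrite E in L. pose proof (Ep_strict _ Z) as [A B].
  rewrite S_INR. pose proof tt_eq. unfold tt in *. lra.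
Qed.

Lemma floor_Sh n : floorR (INR (S n) * phi) = (Z.of_nat (Sh n) + 1)%Z.
Proof.
  unfold floorR, Int_part. destruct (Sh_bounds n) as [A B].
  rewrite <- (up_tech _ (Z.of_nat (Sh n) + 1)); [lia| |].
  - rewrite plus_IZR, <- INR_IZR_INZ. lra.
  - rewrite !plus_IZR, <- INR_IZR_INZ. lra.
Qed.

Lemma Sh_lt n : (Sh n < Sh (S n))%nat.
Proof.
  destruct (Sh_bounds n) as [A B]. destruct (Sh_bounds (S n)) as [C D].
  apply INR_lt. rewrite (S_INR (S n)) in C, D. pose proof tt_b. unfold tt in *. lra.
Qed.
Close Scope R_scope.

Lemma strict_mono (f : nat -> nat) : (forall m, f m < f (S m)) -> forall a b, a < b -> f a < f b.
Proof. intros Hf a b H. induction H; [auto|]. specialize (Hf m). lia. Qed.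

Lemma count_enum (P : nat -> bool) (f : nat -> nat) :
  (forall m, f m < f (S m)) -> (forall x, P x = true <-> exists m, x = f m) ->
  forall m, length (filter P (seq 0 (f m))) = m.
Proof.
  intros Hf HP.
  pose proof (strict_mono f Hf) as Mo.
  assert (Inv : forall a b, f a < f b -> a < b).
  { intros a b H. destruct (Nat.lt_ge_cases a b) as [|H']; auto.
    destruct (Nat.eq_dec a b); [subst; lia|]. assert (b < a) by lia. specialize (Mo _ _ H0). lia. }
  set (len k := length (filter P (seq 0 k))).
  assert (Step : forall k, len (S k) = len k + (if P k then 1 else 0)).
  { intros k. unfold len. rewrite seq_S, filter_app, length_app. simpl. destruct (P k); simpl; lia. }
  assert (Aux : forall k, (k <= f 0 -> len k = 0) /\ (forall m, f m < k <= f (S m) -> len k = S m)).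
  { induction k as [|k [I1 I2]].
    - split; [reflexivity|]. intros; lia.
    - rewrite Step. split.
      + intros Hk. rewrite I1 by lia. destruct (P k) eqn:E; [|lia].
        apply HP in E as [m' ->]. destruct m'; [lia|]. specialize (Mo 0 (S m') ltac:(lia)). lia.
      + intros m Hm. destruct (Nat.eq_dec k (f m)) as [->|Hne].
        * assert (P (f m) = true) by (apply HP; eauto). rewrite H.
          destruct m as [|m0]; [rewrite I1 by lia; lia|]. rewrite (I2 m0); [lia|]. split; [apply Hf|lia].
        * rewrite (I2 m) by lia. destruct (P k) eqn:E; [|lia].
          apply HP in E as [m' ->]. assert (m < m') by (apply Inv; lia). assert (m' < S m) by (apply Inv; lia). lia. }
  intros m. destruct m as [|m0]; [apply Aux; lia|]. apply (Aux (f (S m0))). split; [apply Hf|lia].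
Qed.

Lemma Sh_mono a b : a < b -> Sh a < Sh b.
Proof. apply strict_mono. apply Sh_lt. Qed.

Lemma iter_Sh_lt k m : Nat.iter k Sh m < Nat.iter k Sh (S m).
Proof. induction k; simpl; [lia|]. apply Sh_mono. auto. Qed.

Lemma it2 m : Nat.iter 2 Sh m = Sh m + m.
Proof. simpl. apply Sh2. Qed.
Lemma it3 m : Nat.iter 3 Sh m = 2 * Sh m + m.
Proof. change (Nat.iter 3 Sh m) with (Sh (Sh (Sh m))). rewrite Sh2, Sh2. lia. Qed.
Lemma it4 m : Nat.iter 4 Sh m = 3 * Sh m + 2 * m.
Proof. change (Nat.iter 4 Sh m) with (Sh (Sh (Sh (Sh m)))). rewrite Sh2, Sh2, Sh2. lia. Qed.

Lemma incr_iff N : incr_pt N = true <-> exists m, N = Nat.iter 2 Sh m.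
Proof.
  unfold incr_pt. rewrite Nat.ltb_lt. split.
  - intros H. destruct (cover N) as [A|[[m B]|[[m B]|[m [Hm B]]]]]; auto; exfalso.
    + subst. rewrite DB1 in H. lia.
    + subst. rewrite DB2 in H. lia.
    + pose proof (DC m N Hm B). lia.
  - intros [m ->]. rewrite DA. lia.
Qed.

Lemma const_iff N : const_pt N = true <->
  (exists m, N = S (Nat.iter 3 Sh m)) \/ (exists m, N = S (S (Nat.iter 4 Sh m))).
Proof.
  unfold const_pt. rewrite Nat.eqb_eq. split.
  - intros H. destruct (cover N) as [[m A]|[B|[B|[m [Hm B]]]]]; auto; exfalso.
    + subst. rewrite DA in H. lia.
    + pose proof (DC m N Hm B). lia.
  - intros [[m ->]|[m ->]]; [apply DB1|apply DB2].
Qed.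

Lemma decr_iff N : decr_pt N = true <-> exists m, 1 <= m /\ S N = Nat.iter 3 Sh m.
Proof.
  unfold decr_pt. rewrite Nat.ltb_lt. split.
  - intros H. destruct (cover N) as [[m A]|[[m B]|[[m B]|C]]]; auto; exfalso.
    + subst. rewrite DA in H. lia.
    + subst. rewrite DB1 in H. lia.
    + subst. rewrite DB2 in H. lia.
  - intros [m [Hm E]]. eapply DC; eauto.
Qed.

Theorem theorem2 :
  (* (i) *)
  (forall n : nat, (1 <= n)%nat ->
     exists x : nat, is_nth_smallest incr_pt n x /\
       Z.of_nat x = (floorR (INR n * phi) + Z.of_nat n - 2)%Z)
  /\
  (* (ii) *)
  (forall N : nat, const_pt N = true <->
     exists n : nat, (1 <= n)%nat /\
       (Z.of_nat N = (2 * floorR (INR n * phi) + Z.of_nat n - 2)%Z \/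
        Z.of_nat N = (3 * floorR (INR n * phi) + 2 * Z.of_nat n - 3)%Z))
  /\
  (* (iii) : D_Z(1) = -1 equals the formula at n = 1, and for n >= 1,
     D_Z(n+1) = the n-th smallest point of decrease *)
  ((-1)%Z = (2 * floorR (INR 1 * phi) + Z.of_nat 1 - 4)%Z /\
   forall n : nat, (1 <= n)%nat ->
     exists x : nat, is_nth_smallest decr_pt n x /\
       Z.of_nat x = (2 * floorR (INR (S n) * phi) + Z.of_nat (S n) - 4)%Z).
Proof.
  split; [|split; [|split]].
  - intros n Hn. destruct n as [|m]; [lia|].
    exists (Nat.iter 2 Sh m). split; [split|].
    + apply incr_iff. eauto.
    + rewrite (count_enum incr_pt (fun m => Nat.iter 2 Sh m)); [lia| |].
      * intros; apply iter_Sh_lt.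
      * intros x. apply incr_iff.
    + rewrite floor_Sh, it2. lia.
  - intros N. rewrite const_iff. split.
    + intros [[m E]|[m E]]; exists (S m); split; try lia; rewrite floor_Sh.
      * left. rewrite E, it3. lia.
      * right. rewrite E, it4. lia.
    + intros [n [Hn H]]. destruct n as [|m]; [lia|]. rewrite floor_Sh in H.
      destruct H as [H|H]; [left|right]; exists m.
      * rewrite it3. lia.
      * rewrite it4. lia.
  - pose proof (floor_Sh 0) as F. assert (Sh 0 = 0) by reflexivity. rewrite H in F.
    change (INR 1) with (INR (S 0)). rewrite F. reflexivity.
  - intros n Hn. destruct n as [|m]; [lia|].
    set (f := fun k => pred (Nat.iter 3 Sh (S k))).
    assert (Fpos : forall k, 1 <= Nat.iter 3 Sh (S k)) by (intros k; rewrite it3; lia).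
    exists (f m). split; [split|].
    + apply decr_iff. exists (S m). split; [lia|]. unfold f. specialize (Fpos m). lia.
    + rewrite (count_enum decr_pt f); [lia| |].
      * intros k. unfold f. pose proof (iter_Sh_lt 3 (S k)). specialize (Fpos k). lia.
      * intros x. rewrite decr_iff. split.
        -- intros [k [Hk E]]. destruct k as [|k]; [lia|]. exists k. unfold f. lia.
        -- intros [k ->]. exists (S k). split; [lia|]. unfold f. specialize (Fpos k). lia.
    + unfold f. rewrite floor_Sh. pose proof (it3 (S m)). specialize (Fpos m). lia.
Qed.
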